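(* Let $\Omega$ be a finite state space with at least three states and $X:\Omega\to\mathbb R$ a non-constant security. Then $X$ is separable under every information structure $\Pi\in\mathcal P$ on $\Omega$ (with any number of traders) if and only if either (a) $X$ is an Arrow–Debreu security: there is a state $\omega$ and values $a\neq b$ with $X(\omega)=a$ and $X(\omega')=b$ for all $\omega'\neq\omega$; or (b) there are values $a<b<d$ and two distinct states $\omega_a,\omega_d$ with $X(\omega_a)=a$, $X(\omega_d)=d$ and $X(\omega)=b$ for all $\omega\neq\omega_a,\omega_d$.
   Context: An information structure $\Pi=(\Pi_1,\dots,\Pi_n)$ assigns to each trader $i\in\{1,\dots,n\}$ a partition $\Pi_i$ of $\Omega$; $\Pi_i(\omega)$ is the cell containing $\omega$. $\mathcal P$ is the collection of information structures on state spaces with at least three states such that $\bigcap_i\Pi_i(\omega)=\{\omega\}$ for all $\omega$. $X$ is non-separable under $\Pi$ if there exist a probability distribution $\mu$ on $\Omega$ and $v\in\mathbb R$ such that (i) $X(\omega)\neq v$ for some $\omega\in\operatorname{Supp}(\mu)$, and (ii) $E_\mu[X\mid\Pi_i(\omega)]=v$ for all $i$ and all $\omega\in\operatorname{Supp}(\mu)$; otherwise $X$ is separable under $\Pi$. *)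

(* Defs.v *)
From mathcomp Require Import all_boot all_order all_algebra.
From mathcomp Require Import reals.
Set Implicit Arguments. Unset Strict Implicit. Unset Printing Implicit Defensive.
Import Order.TTheory GRing.Theory Num.Theory.
Local Open Scope ring_scope.

Section Defs.
Variables (R : realType) (Omega : finType).

(* Membership in the class P
   additionally requires that the cells containing w intersect to {w}. *)
Definition info_structure (n : nat) (Pi : 'I_n -> {set {set Omega}}) : Prop :=
  (forall i, partition (Pi i) [set: Omega]) /\
  (forall w, \bigcap_(i < n) pblock (Pi i) w = [set w]).

Definition is_distribution (mu : Omega -> R) : Prop :=
  (forall w, 0 <= mu w) /\ \sum_(w : Omega) mu w = 1.

Definition cond_exp (mu : Omega -> R) (X : Omega -> R) (C : {set Omega}) : R :=
  (\sum_(w in C) mu w * X w) / (\sum_(w in C) mu w).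

Definition non_separable (n : nat) (Pi : 'I_n -> {set {set Omega}})
  (X : Omega -> R) : Prop :=
  exists (mu : Omega -> R) (v : R),
    is_distribution mu /\
    (exists w, 0 < mu w /\ X w <> v) /\
    (forall i w, 0 < mu w -> cond_exp mu X (pblock (Pi i) w) = v).

Definition separable (n : nat) (Pi : 'I_n -> {set {set Omega}})
  (X : Omega -> R) : Prop := ~ non_separable Pi X.

Definition arrow_debreu (X : Omega -> R) : Prop :=
  exists (w : Omega) (a b : R), a <> b /\ X w = a /\
    forall w', w' <> w -> X w' = b.

Definition two_extreme (X : Omega -> R) : Prop :=
  exists (a b d : R) (wa wd : Omega),
    a < b /\ b < d /\ wa <> wd /\ X wa = a /\ X wd = d /\
    forall w, w <> wa -> w <> wd -> X w = b.

End Defs.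

(* Main.v *)
Require Import Defs.
From mathcomp Require Import all_boot all_order all_algebra.
From mathcomp Require Import reals.
From mathcomp Require Import lra ring.
Import Order.TTheory GRing.Theory Num.Theory.
Local Open Scope ring_scope.

Module Helpers.
Set Implicit Arguments. Unset Strict Implicit.
Section Aux.
Variables (R : realType) (Omega : finType).

Lemma exists_min (f : Omega -> R) (i0 : Omega) : exists m, forall x, f m <= f x.
Proof. by case: (@arg_minP _ _ Omega i0 xpredT f isT) => m _ H; exists m => x; apply: H. Qed.

Lemma exists_max (f : Omega -> R) (i0 : Omega) : exists m, forall x, f x <= f m.
Proof. by case: (@arg_maxP _ _ Omega i0 xpredT f isT) => m _ H; exists m => x; apply: H. Qed.

Lemma preim_pblock (f : Omega -> Omega) x y :
  (y \in pblock (preim_partition f [set: Omega]) x) = (f x == f y).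
Proof.
apply: pblock_equivalence_partition; rewrite ?inE //.
by split => // /eqP->.
Qed.

Lemma cond_expN (mu X : Omega -> R) (C : {set Omega}) :
  cond_exp mu (fun x => - X x) C = - cond_exp mu X C.
Proof.
rewrite /cond_exp -mulNr; congr (_ / _).
by rewrite -sumrN; apply: eq_bigr => x _; rewrite mulrN.
Qed.

Lemma opp_point (mu X : Omega -> R) (v : R) (C : {set Omega}) w :
  (forall x, 0 <= mu x) -> w \in C -> 0 < mu w -> cond_exp mu X C = v ->
  v < X w -> exists q, [/\ q \in C, 0 < mu q & X q < v].
Proof.
move=> mu0 wC muw ce vw.
have [q /andP[/andP[qC muq] Xq]|none] :=
  pickP (fun q => (q \in C) && (0 < mu q) && (X q < v)).
  by exists q.
have den0 : 0 < \sum_(x in C) mu x.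
  rewrite (bigD1 w) //=; apply: (lt_le_trans muw); rewrite lerDl.
  by apply: sumr_ge0 => x _.
have num : \sum_(x in C) mu x * X x = v * \sum_(x in C) mu x.
  by rewrite -ce /cond_exp divfK // gt_eqF.
have : \sum_(x in C) (mu x * X x - v * mu x) = 0.
  by rewrite sumrB num mulr_sumr subrr.
rewrite (bigD1 w) //= => /eqP; rewrite gt_eqF //.
apply: ltr_pwDl.
  by rewrite [v * _]mulrC -mulrBr; apply: mulr_gt0 => //; rewrite subr_gt0.
apply: sumr_ge0 => x /andP[xC _].
rewrite [v * _]mulrC -mulrBr; have := none x; rewrite xC /=.
have [->|mx] := eqVneq (mu x) 0; first by rewrite mul0r.
have mx' : 0 < mu x by rewrite lt0r mx mu0.
rewrite mx' /= => /negbT; rewrite -leNgt => vx.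
by apply: mulr_ge0 => //; rewrite subr_ge0.
Qed.

Lemma opp_point' (mu X : Omega -> R) (v : R) (C : {set Omega}) w :
  (forall x, 0 <= mu x) -> w \in C -> 0 < mu w -> cond_exp mu X C = v ->
  X w < v -> exists q, [/\ q \in C, 0 < mu q & v < X q].
Proof.
move=> mu0 wC muw ce vw.
have ce' : cond_exp mu (fun x => - X x) C = - v by rewrite cond_expN ce.
have vw' : - v < - X w by rewrite ltrN2.
have [q [qC muq Xq]] := @opp_point mu (fun x => - X x) (- v) C w mu0 wC muw ce' vw'.
by exists q; split => //; rewrite -ltrN2.
Qed.


Lemma self_pblock n (Pi : 'I_n -> {set {set Omega}}) i w :
  info_structure Pi -> w \in pblock (Pi i) w.
Proof.
by case=> part _; rewrite mem_pblock; case/and3P: (part i) => /eqP -> _ _; rewrite inE.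
Qed.

Lemma side_contra n (Pi : 'I_n -> {set {set Omega}}) (X mu : Omega -> R) v p
  (i0 : 'I_n) :
  info_structure Pi -> (forall x, 0 <= mu x) ->
  (forall i w, 0 < mu w -> cond_exp mu X (pblock (Pi i) w) = v) ->
  (forall x, X x < v -> x = p) -> forall w, 0 < mu w -> v < X w -> False.
Proof.
move=> info mu0 H Hp w muw vw.
have pin i : p \in pblock (Pi i) w.
  have [q [qC _ Xq]] := opp_point mu0 (self_pblock i w info) muw (H i w muw) vw.
  by rewrite -(Hp q Xq).
have : p \in \bigcap_(i < n) pblock (Pi i) w by apply/bigcapP => i _; exact: pin i.
rewrite (proj2 info) inE => /eqP pw.
have [q [qC _ Xq]] := opp_point mu0 (self_pblock i0 w info) muw (H i0 w muw) vw.
have := Hp q Xq; rewrite pw => qw.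
by move: Xq; rewrite qw => h; move: (lt_trans vw h); rewrite ltxx.
Qed.

Lemma side_contra' n (Pi : 'I_n -> {set {set Omega}}) (X mu : Omega -> R) v p
  (i0 : 'I_n) :
  info_structure Pi -> (forall x, 0 <= mu x) ->
  (forall i w, 0 < mu w -> cond_exp mu X (pblock (Pi i) w) = v) ->
  (forall x, v < X x -> x = p) -> forall w, 0 < mu w -> X w < v -> False.
Proof.
move=> info mu0 H Hp w muw vw.
apply: (@side_contra n Pi (fun x => - X x) mu (- v) p i0 info mu0 _ _ w muw).
- by move=> i x mx; rewrite cond_expN H.
- by move=> x; rewrite ltrN2; apply: Hp.
by rewrite ltrN2.
Qed.

Lemma n_pos n (Pi : 'I_n -> {set {set Omega}}) :
  (2 < #|Omega|)%N -> info_structure Pi -> (0 < n)%N.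
Proof.
move=> card3; case: n Pi => // Pi [_ cap].
have /card_gt0P[x _] : (0 < #|Omega|)%N by apply: ltn_trans card3.
have := cap x; rewrite big_ord0 => /(congr1 (fun A : {set Omega} => #|A|)).
by rewrite cardsT cards1 => c; rewrite c in card3.
Qed.

Lemma sep_of n (Pi : 'I_n -> {set {set Omega}}) (X : Omega -> R) :
  (2 < #|Omega|)%N -> info_structure Pi -> arrow_debreu X \/ two_extreme X ->
  separable Pi X.
Proof.
move=> card3 info HX [mu [v [[mu0 _] [[w0 [muw0 Xw0]] H]]]].
have i0 : 'I_n := Ordinal (n_pos card3 info).
have [wp [mup Xp]] : exists wp, 0 < mu wp /\ v < X wp.
  case: (ltrgtP (X w0) v) => [lt|gt|eq]; [|by exists w0|by []].
  have [q [_ ? ?]] := opp_point' mu0 (self_pblock i0 w0 info) muw0 (H i0 w0 muw0) lt.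
  by exists q.
have [wm [mum Xm]] : exists wm, 0 < mu wm /\ X wm < v.
  case: (ltrgtP (X w0) v) => [lt|gt|eq]; [by exists w0| |by []].
  have [q [_ ? ?]] := opp_point mu0 (self_pblock i0 w0 info) muw0 (H i0 w0 muw0) gt.
  by exists q.
case: HX => [[w [a [b [ab [Xw Xo]]]]] | [a [b [d [wa [wd [ab [bd [ne [Xa [Xd Xo]]]]]]]]]]].
- case: (leP v b) => vb.
    apply: (side_contra (p:=w) i0 info mu0 H _ mup Xp) => x Xx.
    case: (eqVneq x w) => [//|/eqP nx].
    by move: Xx; rewrite (Xo x nx) => h; move: (le_lt_trans vb h); rewrite ltxx.
  apply: (side_contra' (p:=w) i0 info mu0 H _ mum Xm) => x Xx.
  case: (eqVneq x w) => [//|/eqP nx].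
  by move: Xx; rewrite (Xo x nx) => h; move: (lt_trans vb h); rewrite ltxx.
- case: (leP v b) => vb.
    apply: (side_contra (p:=wa) i0 info mu0 H _ mup Xp) => x Xx.
    case: (eqVneq x wa) => [//|/eqP nx].
    case: (eqVneq x wd) => [xd|/eqP nd].
      by move: Xx; rewrite xd Xd => h; move: (le_lt_trans (le_trans vb (ltW bd)) h); rewrite ltxx.
    by move: Xx; rewrite (Xo x nx nd) => h; move: (le_lt_trans vb h); rewrite ltxx.
  apply: (side_contra' (p:=wd) i0 info mu0 H _ mum Xm) => x Xx.
  case: (eqVneq x wd) => [//|/eqP nd].
  case: (eqVneq x wa) => [xa|/eqP nx].
    by move: Xx; rewrite xa Xa => h; move: (lt_trans (lt_trans ab vb) h); rewrite ltxx.
  by move: Xx; rewrite (Xo x nx nd) => h; move: (lt_trans vb h); rewrite ltxx.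
Qed.

End Aux.
Ltac crush :=
  repeat (rewrite /=; match goal with
  | H : is_true (?x != ?x) |- _ => by rewrite eqxx in H
  | |- context[?x == ?y] => is_var x; is_var y; case: (eqVneq x y) => [?|?]; try subst
  end); try done.

Section T.
Variables (R : realType) (Omega : finType).


Lemma pair_val (mu X : Omega -> R) v c a b :
  0 < c -> v < X a -> X b < v -> mu a = (X a - v)^-1 * c -> mu b = (v - X b)^-1 * c ->
  (mu a * X a + mu b * X b) / (mu a + mu b) = v.
Proof.
move=> c0 va bv -> ->.
have h1 : X a - v != 0 by rewrite subr_eq0 gt_eqF.
have h2 : v - X b != 0 by rewrite subr_eq0 gt_eqF.
have h3 : (X a - v)^-1 * c + (v - X b)^-1 * c != 0.
  by rewrite gt_eqF // addr_gt0 // mulr_gt0 // invr_gt0 subr_gt0.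
apply: (mulIf h3); rewrite divfK //.
field. by rewrite h1 h2.
Qed.

Lemma cond_exp_pair (mu X : Omega -> R) (C : {set Omega}) a b : a != b ->
  (forall y, (y \in C) = (y == a) || (y == b)) ->
  cond_exp mu X C = (mu a * X a + mu b * X b) / (mu a + mu b).
Proof.
move=> ab HC; have -> : C = [set a; b] by apply/setP => y; rewrite HC !inE.
by rewrite /cond_exp !big_setU1 ?inE //= !big_set1.
Qed.

Lemma construct (X : Omega -> R) (p1 p2 q1 q2 : Omega) (v : R) :
  p1 != p2 -> q1 != q2 -> v < X p1 -> v < X p2 -> X q1 < v -> X q2 < v ->
  exists Pi : 'I_2 -> {set {set Omega}}, info_structure Pi /\ non_separable Pi X.
Proof.
move=> d12 e12 v1 v2 w1 w2.
have ne x y : v < X x -> X y < v -> x != y.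
  by move=> h1 h2; apply/eqP => xy; move: h1; rewrite xy => /(lt_trans h2); rewrite ltxx.
have n11 := ne _ _ v1 w1; have n12 := ne _ _ v1 w2.
have n21 := ne _ _ v2 w1; have n22 := ne _ _ v2 w2.
pose f0 y := if y == q1 then p1 else if y == q2 then p2 else y.
pose f1 y := if y == q1 then p2 else if y == q2 then p1 else y.
pose Pi (i : 'I_2) := preim_partition (if val i == 0%N then f0 else f1) [set: Omega].
have info : info_structure Pi.
  split=> [i|w]; first exact: preim_partitionP.
  apply/setP => y; rewrite inE; apply/bigcapP/idP.
    move=> H; have := H (@Ordinal 2 0 isT) isT; have := H (@Ordinal 2 1 isT) isT.
    rewrite !preim_pblock /= /f0 /f1; clear -d12 e12 n11 n12 n21 n22; crush.
  by move/eqP => -> i _; rewrite preim_pblock.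
pose r y := if (y == p1) || (y == p2) || (y == q1) || (y == q2) then `|X y - v|^-1 else 0.
pose T := \sum_y r y.
have r0 y : 0 <= r y by rewrite /r; case: ifP => _ //; rewrite invr_ge0.
have rp1 : 0 < r p1.
  by rewrite /r eqxx /= invr_gt0 normr_gt0 subr_eq0 gt_eqF.
have T0 : 0 < T.
  rewrite /T (bigD1 p1) //=; apply: (lt_le_trans rp1); rewrite lerDl.
  by apply: sumr_ge0 => x _.
pose mu y := r y / T.
have mu0 y : 0 <= mu y by rewrite divr_ge0 // ltW.
have muP z : v < X z -> (z == p1) || (z == p2) -> mu z = (X z - v)^-1 * T^-1.
  by move=> vy hy; rewrite /mu /r -orbA hy /= gtr0_norm // subr_gt0.
have muQ z : X z < v -> (z == q1) || (z == q2) -> mu z = (v - X z)^-1 * T^-1.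
  by move=> vy hy; rewrite /mu /r -orbA hy orbT /= ltr0_norm ?subr_lt0 // opprB.
exists Pi; split=> //; exists mu, v; split; [split=> // | split].
- by rewrite /mu -mulr_suml mulfV // gt_eqF.
- exists p1; split; last by apply/eqP; rewrite gt_eqF.
  by rewrite /mu divr_gt0.
move=> i w muw.
have hw : (w == p1) || (w == p2) || (w == q1) || (w == q2).
  apply/negPn/negP => hn; move: muw; rewrite /mu /r (negbTE hn) mul0r ltxx //.
have Tinv : 0 < T^-1 by rewrite invr_gt0.
have fin a b : v < X a -> X b < v -> (a == p1) || (a == p2) -> (b == q1) || (b == q2) ->
    (forall y, (y \in pblock (Pi i) w) = (y == a) || (y == b)) ->
    cond_exp mu X (pblock (Pi i) w) = v.
  move=> va vb ha hb hC; rewrite (cond_exp_pair _ _ (ne _ _ va vb) hC).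
  exact: pair_val Tinv va vb (muP _ va ha) (muQ _ vb hb).
have [c1 c2 c3 c4] : [/\ (p1 == p1) || (p1 == p2), (p2 == p1) || (p2 == p2),
   (q1 == q1) || (q1 == q2) & (q2 == q1) || (q2 == q2)] by rewrite !eqxx !orbT.
case: i fin => [[|[|//]] ?];
  (case/orP: hw => [/orP[/orP[]|]|] /eqP -> fin);
  [ apply: (fin p1 q1) | apply: (fin p2 q2) | apply: (fin p1 q1) | apply: (fin p2 q2)
  | apply: (fin p1 q2) | apply: (fin p2 q1) | apply: (fin p2 q1) | apply: (fin p1 q2)] => //;
  move=> y; rewrite preim_pblock /= /f0 /f1; clear -d12 e12 n11 n12 n21 n22; crush.
Qed.
End T.
End Helpers.
Import Helpers.

Theorem proposition3 (R : realType) (Omega : finType) (X : Omega -> R) :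
  (2 < #|Omega|)%N ->
  (exists w1 w2 : Omega, X w1 <> X w2) ->
  ((forall (n : nat) (Pi : 'I_n -> {set {set Omega}}),
      info_structure Pi -> separable Pi X)
   <-> (arrow_debreu X \/ two_extreme X)).
Proof.
move=> card3 [w1 [w2 X12]]; split; last first.
  by move=> HX n Pi info; apply: sep_of.
move=> Hsep.
have [m Hm] := exists_min X w1.
have [M HM] := exists_max X w1.
have mM : X m < X M.
  rewrite lt_neqAle (le_trans (Hm w1) (HM w1)) andbT; apply/eqP => e.
  apply: X12; apply/eqP; rewrite eq_le.
  have h12 : X w1 <= X w2.
    by have := HM w1; have := Hm w2; rewrite -e => h1 h2; exact: le_trans h2 h1.
  have h21 : X w2 <= X w1.
    by have := HM w2; have := Hm w1; rewrite -e => h1 h2; exact: le_trans h2 h1.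
  by rewrite h12 h21.
have [/existsP[y /existsP[z /and5P[ym yM zm zM yz]]]|/existsPn Hn] :=
  boolP [exists y, exists z, [&& y != m, y != M, z != m, z != M & X y < X z]].
  exfalso.
  have [h1 h2] := midf_lt yz.
  have Mz : M != z by rewrite eq_sym.
  have my : m != y by rewrite eq_sym.
  have [Pi [info ns]] := @construct R Omega X M z m y ((X y + X z) / 2)
    Mz my (lt_le_trans h2 (HM z)) h2
    (le_lt_trans (Hm y) h1) h1.
  exact: (Hsep 2 Pi info ns).
have heq y z : y != m -> y != M -> z != m -> z != M -> X z <= X y.
  move=> ym yM zm zM; move: (Hn y) => /existsPn /(_ z).
  by rewrite ym yM zm zM /= -leNgt.
have [c /andP[cm cM]|none] := pickP (fun c => (c != m) && (c != M)); last first.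
  exfalso; have sub : [set: Omega] \subset [set m; M].
    apply/subsetP => x _; rewrite !inE; move: (none x) => /= /negbT.
    by rewrite negb_and !negbK orbC.
  have := subset_leq_card sub; rewrite cardsT cards2 => h.
  have h2 : ((m != M).+1 <= 2)%N by case: (m != M).
  by move: (leq_trans h h2); rewrite leqNgt card3.
have heqb y : y != m -> y != M -> X y = X c.
  by move=> ym yM; apply: le_anti; rewrite !heq.
case: (eqVneq (X m) (X c)) => [emc|nmc].
  left; exists M, (X M), (X c); split.
    by move=> h; move: mM; rewrite emc -h ltxx.
  split=> // w' /eqP wM.
  by case: (eqVneq w' m) => [->//|wm]; exact: heqb.
case: (eqVneq (X M) (X c)) => [eMc|nMc].
  left; exists m, (X m), (X c); split; first by apply/eqP.
  split=> // w' /eqP wm.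
  by case: (eqVneq w' M) => [->//|wM']; exact: heqb.
right; exists (X m), (X c), (X M), m, M.
split; first by rewrite lt_neqAle nmc Hm.
split; first by rewrite lt_neqAle eq_sym nMc HM.
split; first by move=> e; move: mM; rewrite e ltxx.
do 2 (split; first by []).
by move=> w' /eqP wm /eqP wM; exact: heqb.
Qed.
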